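(* Let $G$ be a finite, simple, connected $(q+1)$-regular graph with $n$ vertices and $m$ edges, let $a\in[0,1]$ and $b\in\mathbb R$, and set $\eta=(1-q)a+b(q+1)$ and $\sigma=b((1-q)a+bq)$. Then the $(a,b)$-zeta function of $G$ satisfies \begin{align*} \mathbf Z_{a,b}(G,u)^{-1}&=(1-b^2u^2)^{m-n}\det\big((1+\sigma u^2)\mathbf I_n-\eta u\mathbf P(G)\big)\\ &=(1-b^2u^2)^{m-n}\det\Big((1-\eta u+\sigma u^2)\mathbf I_n+\frac{\eta u}{q+1}\Delta\Big), \end{align*} where $\Delta=\mathbf D-\mathbf A(G)$ is the Laplacian of $G$.
   Context: $D(G)$ is the set of $2m$ arcs of $G$ (for each edge $uv$, both $(u,v)$ and $(v,u)$); for $e=(u,v)$, $o(e)=u$, $t(e)=v$, $e^{-1}=(v,u)$, and $d_v=\deg v$. The generalized Grover matrix $\tilde{\mathbf U}=(\tilde U_{ef})_{e,f\in D(G)}$ has $\tilde U_{ef}=(2/d_{t(f)}-1)a+b$ if $t(f)=o(e)$ and $f\ne e^{-1}$; $\tilde U_{ef}=(2/d_{t(f)}-1)a$ if $f=e^{-1}$; $0$ otherwise. The $(a,b)$-zeta function is defined by $\mathbf Z_{a,b}(G,u)^{-1}=\det(\mathbf I_{2m}-u\tilde{\mathbf U})$. $\mathbf P(G)$ has entries $P_{uv}=1/\deg u$ if $u,v$ adjacent and $0$ otherwise; $\mathbf D$ is the diagonal degree matrix and $\mathbf A(G)$ the adjacency matrix. *)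

(* Defs.v *)
From HB Require Import structures.
From mathcomp Require Import all_boot all_order all_algebra.
Set Implicit Arguments. Unset Strict Implicit. Unset Printing Implicit Defensive.
Import Order.TTheory GRing.Theory Num.Theory.
Local Open Scope ring_scope.

Definition simple_graph (V : finType) (adj : rel V) : Prop :=
  symmetric adj /\ irreflexive adj.

Definition connected_graph (V : finType) (adj : rel V) : Prop :=
  forall x y : V, connect adj x y.

Definition deg (V : finType) (adj : rel V) (v : V) : nat := #|[set w | adj v w]|.

Definition regular_graph (V : finType) (adj : rel V) (k : nat) : Prop :=
  forall v : V, deg adj v = k.

Definition nedges (V : finType) (adj : rel V) : nat :=
  #|[set e : {set V} | [exists u, exists v, adj u v && (e == [set u; v])]]|.

Definition arc (V : finType) (adj : rel V) := {p : V * V | adj p.1 p.2}.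

(* entry U~_{ef} of the generalized Grover matrix; o(e) = e.1, t(e) = e.2 *)
Definition grover_entry (R : fieldType) (V : finType) (adj : rel V) (a b : R)
  (e f : arc adj) : R :=
  let e' := val e in let f' := val f in
  if f'.2 == e'.1 then
    if f' == (e'.2, e'.1) then (2 / (deg adj f'.2)%:R - 1) * a
    else (2 / (deg adj f'.2)%:R - 1) * a + b
  else 0.

Definition grover_mx (R : fieldType) (V : finType) (adj : rel V) (a b : R)
  : 'M[R]_#|{: arc adj}| :=
  \matrix_(i, j) grover_entry a b (enum_val i) (enum_val j).

Definition zeta_ab_inv (R : fieldType) (V : finType) (adj : rel V) (a b u : R) : R :=
  \det (1%:M - u *: grover_mx adj a b).

Definition Pmx (R : fieldType) (V : finType) (adj : rel V) : 'M[R]_#|V| :=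
  \matrix_(i, j) if adj (enum_val i) (enum_val j)
                 then ((deg adj (enum_val i))%:R)^-1 else 0.

Definition Dmx (R : fieldType) (V : finType) (adj : rel V) : 'M[R]_#|V| :=
  \matrix_(i, j) if i == j then (deg adj (enum_val i))%:R else 0.

Definition Amx (R : fieldType) (V : finType) (adj : rel V) : 'M[R]_#|V| :=
  \matrix_(i, j) if adj (enum_val i) (enum_val j) then 1 else 0.

Definition laplacian (R : fieldType) (V : finType) (adj : rel V) : 'M[R]_#|V| :=
  Dmx R adj - Amx R adj.

(* Main.v *)
Require Import Defs.
From HB Require Import structures.
From mathcomp Require Import all_boot all_order all_algebra.
From mathcomp Require Import ring.
Import Order.TTheory GRing.Theory Num.Theory.
Set Implicit Arguments. Unset Strict Implicit. Unset Printing Implicit Defensive.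
Local Open Scope ring_scope.

Lemma sylvester (R : comRingType) m n (A : 'M[R]_(m, n)) (B : 'M[R]_(n, m)) :
  \det (1%:M + A *m B) = \det (1%:M + B *m A).
Proof.
pose M := block_mx 1%:M A (- B) 1%:M.
have h1 : block_mx 1%:M 0 B 1%:M *m M = block_mx 1%:M A 0 (1%:M + B *m A).
  by rewrite mulmx_block !mul1mx !mul0mx !addr0 mulmx1 subrr [_ + 1%:M]addrC.
have h2 : block_mx 1%:M (- A) 0 1%:M *m M = block_mx (1%:M + A *m B) 0 (- B) 1%:M.
  by rewrite mulmx_block !mul1mx !mul0mx mulNmx mulmxN opprK mulmx1 subrr sub0r add0r.
have e1 := congr1 determinant h1; rewrite det_mulmx det_lblock det_ublock !det1 !mul1r in e1.
have e2 := congr1 determinant h2; rewrite det_mulmx det_lblock det_ublock !det1 !mul1r mulr1 in e2.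
by rewrite -e1 -e2.
Qed.

Lemma det_invol (R : comRingType) N (J E : 'M[R]_N) (x : R) :
  J *m J = 1%:M -> E *m E = E -> J *m E = (1%:M - E) *m J ->
  \det (1%:M + x *: J) = \det (E + (1 - x^+2) *: (1%:M - E)).
Proof.
move=> JJ EE JE.
set F := 1%:M - E; set k := 1 - x^+2.
have EF : E *m F = 0 by rewrite /F mulmxBr mulmx1 EE subrr.
have FE : F *m E = 0 by rewrite /F mulmxBl mul1mx EE subrr.
have FF : F *m F = F by rewrite {1}/F mulmxBl mul1mx EF subr0.
have EpF : E + F = 1%:M by rewrite /F addrC subrK.
have JF : J *m F = E *m J by rewrite /F mulmxBr mulmx1 JE mulmxBl mul1mx opprB addrC subrK.
have EJF : E *m (J *m F) = J *m F by rewrite JF mulmxA EE.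
have JEJF : (J *m E) *m (J *m F) = F.
  by rewrite JE JF mulmxA -(mulmxA F J E) JE (mulmxA F F J) FF -mulmxA JJ mulmx1.
have P1 : (1%:M + x *: (J *m E)) *m (E + k *: F) = E + k *: F + x *: (J *m E).
  rewrite mulmxDl mul1mx; congr (_ + _); rewrite -scalemxAl; congr (_ *: _).
  by rewrite mulmxDr -mulmxA EE -scalemxAr -mulmxA EF mulmx0 scaler0 addr0.
have FG : F *m (J *m F) = 0 by rewrite JF mulmxA FE mul0mx.
have P2 : (E + k *: F + x *: (J *m E)) *m (1%:M + x *: (J *m F)) = 1%:M + x *: J.
  rewrite mulmxDr mulmx1 -scalemxAr !mulmxDl -!scalemxAl -EJF -!mulmxA EJF FG.
  rewrite EJF mulmxA JJ mul1mx scaler0 addr0.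
  have -> : J *m F = J - J *m E by rewrite /F mulmxBr mulmx1.
  rewrite /F /k; apply/matrixP => i j; rewrite !mxE; ring.
have d1 : \det (1%:M + x *: (J *m E)) = 1.
  rewrite -EE mulmxA scalemxAl sylvester -scalemxAr JE -/F mulmxA EF mul0mx.
  by rewrite scaler0 addr0 det1.
have d3 : \det (1%:M + x *: (J *m F)) = 1.
  rewrite -EJF scalemxAl sylvester -scalemxAr -mulmxA FE mulmx0.
  by rewrite scaler0 addr0 det1.
by rewrite -P2 -P1 !det_mulmx d1 d3 mul1r mulr1.
Qed.

Lemma det_main (R : fieldType) N n (S : 'M[R]_(N,n)) (T : 'M[R]_(n,N)) (J : 'M[R]_N)
    (al be : R) :
  J *m J = 1%:M -> 1 - be^+2 != 0 ->
  \det (1%:M - (al *: (S *m T) - be *: J)) =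
  \det (1%:M + be *: J) *
  \det (1%:M - (al / (1 - be^+2)) *: (T *m S - be *: (T *m J *m S))).
Proof.
move=> JJ k0; set k := 1 - be^+2.
have WW : (1%:M + be *: J) *m (1%:M - be *: J) = k *: 1%:M.
  rewrite mulmxDl mul1mx mulmxBr mulmx1 -scalemxAl -scalemxAr JJ.
  rewrite scalerA /k; apply/matrixP => i j; rewrite !mxE; ring.
have -> : 1%:M - (al *: (S *m T) - be *: J) =
   (1%:M + be *: J) *m (1%:M + (- (al / k) *: ((1%:M - be *: J) *m S)) *m T).
  rewrite mulmxDr mulmx1 -scalemxAl -scalemxAr !mulmxA WW -!scalemxAl mul1mx.
  rewrite scalerA mulNr divfK //.
  apply/matrixP => i j; rewrite !mxE; ring.
rewrite det_mulmx sylvester -scalemxAr mulmxBl mul1mx mulmxBr -scalemxAl -scalemxAr mulmxA.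
congr (_ * \det _); apply/matrixP => i j; rewrite !mxE; ring.
Qed.

Definition mxof (R : comRingType) (T1 T2 : finType) (F : T1 -> T2 -> R)
  : 'M[R]_(#|T1|, #|T2|) := \matrix_(i, j) F (enum_val i) (enum_val j).

Lemma mul_mxof (R : comRingType) (T1 T2 T3 : finType) (F : T1 -> T2 -> R) (G : T2 -> T3 -> R) :
  mxof F *m mxof G = mxof (fun x z => \sum_y F x y * G y z).
Proof.
apply/matrixP => i k; rewrite !mxE.
rewrite (big_enum_val (A := T2) (fun y => F (enum_val i) y * G y (enum_val k))) /=.
by apply: eq_bigr => j _; rewrite !mxE.
Qed.

Lemma eq_mxof (R : comRingType) (T1 T2 : finType) (F G : T1 -> T2 -> R) :
  (forall x y, F x y = G x y) -> mxof F = mxof G.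
Proof. by move=> h; apply/matrixP => i j; rewrite !mxE h. Qed.

Lemma mxof1 (R : comRingType) (T : finType) :
  mxof (fun x y : T => (x == y)%:R) = 1%:M :> 'M[R]_#|T|.
Proof. by apply/matrixP => i j; rewrite !mxE (inj_eq enum_val_inj). Qed.

Lemma mxofD (R : comRingType) (T1 T2 : finType) (F G : T1 -> T2 -> R) :
  mxof F + mxof G = mxof (fun x y => F x y + G x y).
Proof. by apply/matrixP => i j; rewrite !mxE. Qed.

Lemma mxofN (R : comRingType) (T1 T2 : finType) (F : T1 -> T2 -> R) :
  - mxof F = mxof (fun x y => - F x y).
Proof. by apply/matrixP => i j; rewrite !mxE. Qed.

Lemma mxofZ (R : comRingType) (T1 T2 : finType) (c : R) (F : T1 -> T2 -> R) :
  c *: mxof F = mxof (fun x y => c * F x y).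
Proof. by apply/matrixP => i j; rewrite !mxE. Qed.

Lemma sum_dl (R : comRingType) (T : finType) (a : T) (G : T -> R) :
  \sum_y (a == y)%:R * G y = G a.
Proof.
rewrite (bigD1 a) //= eqxx mul1r big1 ?addr0 // => y /negbTE h.
by rewrite eq_sym h mul0r.
Qed.

Lemma natr_and (R : comRingType) (a b : bool) : (a && b)%:R = a%:R * b%:R :> R.
Proof. by case: a; case: b; rewrite ?mul1r ?mul0r. Qed.

Lemma swap_proof (V : finType) (adj : rel V) (hs : symmetric adj) (e : Defs.arc adj) :
  adj (val e).2 (val e).1.
Proof. by rewrite hs; exact: (valP e). Qed.

Definition swap_arc (V : finType) (adj : rel V) (hs : symmetric adj) (e : Defs.arc adj)
  : Defs.arc adj := exist _ ((val e).2, (val e).1) (swap_proof hs e).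

Lemma swap_arcK (V : finType) (adj : rel V) (hs : symmetric adj) (e : Defs.arc adj) :
  swap_arc hs (swap_arc hs e) = e.
Proof. by apply: val_inj; case: e => [[x y] h]. Qed.

Lemma swap_arc_eq (V : finType) (adj : rel V) (hs : symmetric adj) (e f : Defs.arc adj) :
  (f == swap_arc hs e) = (e == swap_arc hs f).
Proof.
apply/eqP/eqP => ->; by rewrite swap_arcK.
Qed.

Definition inX (V : finType) (adj : rel V) (e : Defs.arc adj) : bool :=
  (nat_of_ord (enum_rank (val e).1) < nat_of_ord (enum_rank (val e).2))%N.

Lemma inX_swap (V : finType) (adj : rel V) (hs : symmetric adj) (hi : irreflexive adj)
  (e : Defs.arc adj) : inX (swap_arc hs e) = ~~ inX e.
Proof.
rewrite /inX /=; case: ltngtP => // h.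
have : (val e).1 = (val e).2 by apply: enum_rank_inj; apply: val_inj.
by move=> h'; have := valP e; rewrite /= h' hi.
Qed.

Definition Jmx (R : comRingType) (V : finType) (adj : rel V) (hs : symmetric adj)
  : 'M[R]_#|{: Defs.arc adj}| := mxof (fun e f => (f == swap_arc hs e)%:R).
Definition Emx (R : comRingType) (V : finType) (adj : rel V)
  : 'M[R]_#|{: Defs.arc adj}| := mxof (fun e f : Defs.arc adj => ((e == f) && inX e)%:R).

Lemma JJ (R : comRingType) (V : finType) (adj : rel V) (hs : symmetric adj) :
  Jmx R hs *m Jmx R hs = 1%:M.
Proof.
rewrite mul_mxof -mxof1; apply: eq_mxof => e g.
under eq_bigr => f _ do rewrite eq_sym.
by rewrite sum_dl swap_arcK eq_sym.
Qed.

Lemma EE (R : comRingType) (V : finType) (adj : rel V) :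
  Emx R adj *m Emx R adj = Emx R adj.
Proof.
rewrite mul_mxof; apply: eq_mxof => e g.
under eq_bigr => f _ do rewrite natr_and -mulrA.
by rewrite sum_dl; case: (inX e); rewrite ?mul1r ?mul0r ?andbF.
Qed.

Lemma Fmx (R : comRingType) (V : finType) (adj : rel V) :
  1%:M - Emx R adj = mxof (fun e f : Defs.arc adj => ((e == f) && ~~ inX e)%:R).
Proof.
rewrite -mxof1 mxofN mxofD; apply: eq_mxof => e f.
by case: (e == f); case: (inX e); rewrite /= ?subrr ?subr0.
Qed.

Lemma JE (R : comRingType) (V : finType) (adj : rel V) (hs : symmetric adj)
   (hi : irreflexive adj) :
  Jmx R hs *m Emx R adj = (1%:M - Emx R adj) *m Jmx R hs.
Proof.
rewrite Fmx !mul_mxof; apply: eq_mxof => e g.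
under eq_bigr => f _ do rewrite eq_sym.
under [RHS]eq_bigr => f _ do rewrite natr_and -mulrA.
by rewrite !sum_dl (inX_swap hs hi) natr_and mulrC eq_sym.
Qed.

Lemma det_EF (R : comRingType) (V : finType) (adj : rel V) (k : R) :
  \det (Emx R adj + k *: (1%:M - Emx R adj)) = k ^+ #|[set e : Defs.arc adj | ~~ inX e]|.
Proof.
have -> : Emx R adj + k *: (1%:M - Emx R adj) =
   diag_mx (\row_i (if inX (enum_val i) then 1 else k)).
  rewrite Fmx /Emx mxofZ mxofD; apply/matrixP => i j; rewrite !mxE (inj_eq enum_val_inj).
  by case: (i == j); case: (inX _); rewrite /= ?mulr0 ?mulr1 ?addr0 ?add0r.
rewrite det_diag.
under eq_bigr => i _ do rewrite mxE.
rewrite -(big_enum_val (A := {: Defs.arc adj}) (fun e => if inX e then 1 else k)) /=.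
rewrite (bigID (@inX V adj)) /= big1 ?mul1r; last by move=> e ->.
rewrite -prodr_const; apply: eq_big => [e|e]; first by rewrite inE.
by move/negbTE => ->.
Qed.

Lemma card_notX (V : finType) (adj : rel V) (hs : symmetric adj) (hi : irreflexive adj) :
  #|[set e : Defs.arc adj | ~~ inX e]| = nedges adj.
Proof.
have neq (e : Defs.arc adj) : (val e).1 != (val e).2 :> V.
  by apply/eqP => h; move: (valP e); rewrite /= h hi.
rewrite /nedges -(card_in_imset (f := fun e : Defs.arc adj => [set (val e).1; (val e).2])
   (D := [set e : Defs.arc adj | ~~ inX e])).
  apply: eq_card => E; rewrite [in RHS]inE; apply/imsetP/existsP.
    move=> [e _ ->]; exists (val e).1; apply/existsP; exists (val e).2.
    by rewrite eqxx andbT; exact: (valP e).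
  move=> [u /existsP [v /andP [huv /eqP ->]]].
  pose e0 : Defs.arc adj := exist _ (u, v) huv.
  case hX : (inX e0).
    exists (swap_arc hs e0); first by rewrite inE (inX_swap hs hi) hX.
    by rewrite /= setUC.
  by exists e0; rewrite ?inE ?hX.
move=> e1 e2; rewrite !inE /inX => h1 h2 h.
have a1 : (val e1).1 \in [set (val e2).1; (val e2).2] by rewrite -h set21.
have b1 : (val e1).2 \in [set (val e2).1; (val e2).2] by rewrite -h set22.
apply: val_inj; move: a1 b1 h1 (neq e1) h2 (neq e2).
case: (val e1) => [x1 y1]; case: (val e2) => [x2 y2] /= a1 b1 h1 n1 h2 n2.
case/set2P: a1 => ex; case/set2P: b1 => ey; subst.
- by rewrite eqxx in n1.
- by [].
- exfalso; move: h1 h2; rewrite -!leqNgt => h1 h2.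
  have : enum_rank x2 = enum_rank y2 by apply: val_inj; apply/eqP; rewrite eqn_leq h1 h2.
  by move/enum_rank_inj => ex; rewrite ex eqxx in n2.
- by rewrite eqxx in n1.
Qed.

Lemma sum_ind (R : comRingType) (T : finType) (P : pred T) :
  \sum_g (P g)%:R = #|[set g | P g]|%:R :> R.
Proof.
rewrite -sum1dep_card natr_sum [RHS]big_mkcond /=; apply: eq_bigr => g _; by case: (P g).
Qed.

Lemma count_from (V : finType) (adj : rel V) (v : V) :
  #|[set g : Defs.arc adj | (val g).1 == v]| = deg adj v.
Proof.
rewrite /deg -(card_in_imset (f := fun g : Defs.arc adj => (val g).2)
   (D := [set g : Defs.arc adj | (val g).1 == v])).
  apply: eq_card => w; rewrite [in RHS]inE; apply/imsetP/idP.
    move=> [g]; rewrite inE => /eqP h ->; rewrite -h; exact: (valP g).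
  by move=> h; exists (exist _ (v, w) h); rewrite ?inE.
move=> g1 g2; rewrite !inE => /eqP h1 /eqP h2 h; apply: val_inj; move: h1 h2 h.
by case: (val g1) => [x1 y1]; case: (val g2) => [x2 y2] /= -> -> ->.
Qed.

Definition Smx (R : comRingType) (V : finType) (adj : rel V) :=
  mxof (fun (e : Defs.arc adj) (v : V) => ((val e).1 == v)%:R :> R).
Definition Tmx (R : comRingType) (V : finType) (adj : rel V) :=
  mxof (fun (v : V) (f : Defs.arc adj) => ((val f).2 == v)%:R :> R).

Lemma STmx (R : comRingType) (V : finType) (adj : rel V) :
  Smx R adj *m Tmx R adj = mxof (fun e f : Defs.arc adj => ((val f).2 == (val e).1)%:R).
Proof. by rewrite mul_mxof; apply: eq_mxof => e f; rewrite sum_dl. Qed.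

Lemma TSmx (R : fieldType) (V : finType) (adj : rel V) (hs : symmetric adj) :
  Tmx R adj *m Smx R adj = Amx R adj.
Proof.
rewrite mul_mxof; apply/matrixP => i j; rewrite !mxE.
set v := enum_val i; set w := enum_val j.
under eq_bigr => f _ do rewrite -natr_and andbC (surjective_pairing (val f)) -xpair_eqE
  -surjective_pairing.
rewrite hs; case h : (adj w v).
  pose e0 : Defs.arc adj := exist _ (w, v) h.
  have hf (f : Defs.arc adj) : (val f == (w, v)) = (e0 == f) by rewrite eq_sym -val_eqE.
  under eq_bigr => f _ do rewrite hf.
  by rewrite (bigD1 e0) //= eqxx big1 ?addr0 // => f /negbTE; rewrite eq_sym => ->.
rewrite big1 // => f _; case: eqP => // hv; move: (valP f); by rewrite /= hv /= h.
Qed.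

Lemma TJSmx (R : fieldType) (V : finType) (adj : rel V) (hs : symmetric adj) (d : nat)
  (hreg : regular_graph adj d) :
  Tmx R adj *m Jmx R hs *m Smx R adj = d%:R *: 1%:M.
Proof.
have -> : Tmx R adj *m Jmx R hs = mxof (fun (v : V) (g : Defs.arc adj) => ((val g).1 == v)%:R).
  rewrite mul_mxof; apply: eq_mxof => v g.
  under eq_bigr => f _ do rewrite -swap_arc_eq mulrC eq_sym.
  by rewrite sum_dl.
rewrite mul_mxof -mxof1 mxofZ; apply: eq_mxof => v w.
case: (eqVneq v w) => [<-|ne].
  under eq_bigr => g _ do rewrite -natr_and andbb.
  by rewrite sum_ind count_from hreg mulr1.
rewrite mulr0 big1 // => g _.
by case: eqP => [->|]; rewrite ?mul0r // (negbTE ne) mulr0.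
Qed.

Lemma grover_eq (R : fieldType) (V : finType) (adj : rel V) (hs : symmetric adj) (q : nat)
  (hreg : regular_graph adj q.+1) (a b : R) :
  grover_mx adj a b =
  ((2 / (q.+1)%:R - 1) * a + b) *: (Smx R adj *m Tmx R adj) - b *: Jmx R hs.
Proof.
rewrite STmx /Jmx mxofZ mxofZ mxofN mxofD; apply/matrixP => i j; rewrite !mxE.
set e := enum_val i; set f := enum_val j.
have hJ : (f == swap_arc hs e) = (val f == ((val e).2, (val e).1)) by rewrite -val_eqE.
rewrite hJ /grover_entry /= hreg.
case: eqP => h2.
  case: eqP => h3; rewrite ?eqxx /=; first ring.
  ring.
case: eqP => h3; last by rewrite mulr0 mulr0 subr0.
by exfalso; apply: h2; rewrite h3.
Qed.

Lemma Pmx_eq (R : fieldType) (V : finType) (adj : rel V) (d : nat)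
  (hreg : regular_graph adj d) :
  Pmx R adj = (d%:R)^-1 *: Amx R adj.
Proof.
apply/matrixP => i j; rewrite !mxE hreg.
by case: (adj _ _); rewrite ?mulr1 ?mulr0.
Qed.

Lemma Dmx_eq (R : fieldType) (V : finType) (adj : rel V) (d : nat)
  (hreg : regular_graph adj d) :
  Dmx R adj = d%:R *: 1%:M.
Proof.
apply/matrixP => i j; rewrite !mxE hreg.
by case: (i == j); rewrite ?mulr1 ?mulr0.
Qed.

Theorem proposition1 (R : realFieldType) (V : finType) (adj : rel V) (q : nat)
  (a b : R) :
  simple_graph adj -> connected_graph adj -> regular_graph adj q.+1 ->
  0 <= a <= 1 ->
  let n := #|V| in
  let m := nedges adj in
  let eta := (1 - q%:R) * a + b * (q%:R + 1) in
  let sigma := b * ((1 - q%:R) * a + b * q%:R) in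
  forall u : R, 1 - b ^+ 2 * u ^+ 2 != 0 ->
    zeta_ab_inv adj a b u
      = (1 - b ^+ 2 * u ^+ 2) ^ (m%:Z - n%:Z)
        * \det ((1 + sigma * u ^+ 2) *: 1%:M - (eta * u) *: Pmx R adj)
    /\
    zeta_ab_inv adj a b u
      = (1 - b ^+ 2 * u ^+ 2) ^ (m%:Z - n%:Z)
        * \det ((1 - eta * u + sigma * u ^+ 2) *: 1%:M
                + (eta * u / (q%:R + 1)) *: laplacian R adj).
Proof.
move=> [hs hi] _ hreg _ n m eta sigma u hk.
have hd : (q%:R + 1 : R) != 0 by rewrite natr1 pnatr_eq0.
have hk' : 1 - (u * b) ^+ 2 != 0 by rewrite exprMn mulrC.
have main : zeta_ab_inv adj a b u = (1 - b ^+ 2 * u ^+ 2) ^ (m%:Z - n%:Z)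
        * \det ((1 + sigma * u ^+ 2) *: 1%:M - (eta * u) *: Pmx R adj).
  rewrite /zeta_ab_inv (grover_eq hs hreg) scalerBr !scalerA det_main ?JJ //.
  rewrite (det_invol _ (JJ R hs) (EE R adj) (JE R hs hi)) det_EF card_notX //.
  rewrite TSmx // (TJSmx R hs hreg) (Pmx_eq R hreg).
  set A := Amx R adj.
  set k := 1 - b ^+ 2 * u ^+ 2.
  have -> : 1 - (u * b) ^+ 2 = k by rewrite /k exprMn mulrC.
  have -> : 1%:M - (u * ((2 / q.+1%:R - 1) * a + b) / k) *: (A - u * b *: (q.+1%:R *: 1%:M))
      = k^-1 *: ((1 + sigma * u ^+ 2) *: 1%:M - eta * u *: (q.+1%:R^-1 *: A)).
    have hq : (q.+1%:R : R) = q%:R + 1 by rewrite natr1.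
    apply/matrixP => i j; rewrite !mxE /sigma /eta hq.
    move: ((i == j)%:R) (if adj _ _ then _ else _) => x y.
    rewrite /k; field; by rewrite hd exprMn hk.
  rewrite (@detZ R) expfzDr ?hk // -exprnN exprVn mulrA.
  by [].

rewrite main; split => //; congr (_ * \det _).
rewrite /laplacian (Dmx_eq R hreg) (Pmx_eq R hreg).
set A := Amx R adj.
have hq : (q.+1%:R : R) = q%:R + 1 by rewrite natr1.
apply/matrixP => i j; rewrite !mxE hq.
move: ((i == j)%:R) (if adj _ _ then _ else _) => x y.
field; exact: hd.
Qed.
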